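(* Let $\kappa<\lambda$ be infinite regular cardinals. Then $\mathbb{P}(\lambda,\kappa)$ is $\kappa$-directed closed.
   Context: For a set $C$ of ordinals, $C'=\{\alpha\in C\mid\sup(C\cap\alpha)=\alpha\}$. $\mathbb{P}(\lambda,\kappa)$ consists of conditions $p=\langle C^p_{\alpha,i}\mid\alpha\le\gamma^p,\ i(\alpha)^p\le i<\kappa\rangle$ such that: (1) $\gamma^p<\lambda$ is a limit ordinal and for all limit $\alpha\le\gamma^p$, $i(\alpha)^p<\kappa$; (2) for limit $\alpha\le\gamma^p$ and $i(\alpha)^p\le i<\kappa$, $C^p_{\alpha,i}$ is club in $\alpha$; (3) for limit $\alpha\le\gamma^p$ and $i(\alpha)^p\le i<j<\kappa$, $C^p_{\alpha,i}\subseteq C^p_{\alpha,j}$; (4) for limit $\alpha<\beta\le\gamma^p$ and $i(\beta)^p\le i<\kappa$, if $\alpha\in(C^p_{\beta,i})'$ then $i(\alpha)^p\le i$ and $C^p_{\beta,i}\cap\alpha=C^p_{\alpha,i}$; (5) for limit $\alpha<\beta\le\gamma^p$ there is $i<\kappa$ with $\alpha\in(C^p_{\beta,i})'$. The order is end-extension: $q\le p$ iff $\gamma^q\ge\gamma^p$ and for all limit $\alpha\le\gamma^p$, $i(\alpha)^q=i(\alpha)^p$ and $C^q_{\alpha,i}=C^p_{\alpha,i}$ for $i(\alpha)^p\le i<\kappa$. A poset is $\kappa$-directed closed if every directed subset of size $<\kappa$ has a lower bound. *)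

(* Defs.v *)
(* Ordinals below a cardinal are modelled as elements of a
   well-ordered type. *)
From Stdlib Require Import Arith.

Section Basics.
Variable T : Type.
Variable lt : T -> T -> Prop.

Definition le (x y : T) : Prop := lt x y \/ x = y.

Definition IsWellOrder : Prop :=
  (forall x, ~ lt x x) /\
  (forall x y z, lt x y -> lt y z -> lt x z) /\
  (forall x y, lt x y \/ x = y \/ lt y x) /\
  well_founded lt.

Definition isLimit (a : T) : Prop :=
  (exists b, lt b a) /\ (forall b, lt b a -> exists d, lt b d /\ lt d a).

Definition inDerived (C : T -> Prop) (a : T) : Prop :=
  C a /\ (forall b, lt b a -> exists d, C d /\ lt b d /\ lt d a).

Definition isClubIn (C : T -> Prop) (a : T) : Prop :=
  (forall x, C x -> lt x a) /\
  (forall b, lt b a -> exists d, C d /\ lt b d /\ lt d a) /\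
  (forall d, lt d a -> isLimit d ->
     (forall b, lt b d -> exists e, C e /\ lt b e /\ lt e d) -> C d).
End Basics.

Definition inj_into (A B : Type) : Prop :=
  exists f : A -> B, forall x y, f x = f y -> x = y.
Definition card_lt (A B : Type) : Prop := inj_into A B /\ ~ inj_into B A.

Definition InfRegCard (T : Type) (lt : T -> T -> Prop) : Prop :=
  IsWellOrder T lt /\
  (* initial ordinal: every proper initial segment has smaller cardinality *)
  (forall x : T, ~ inj_into T {y : T | lt y x}) /\
  inj_into nat T /\
  (* regular: every cofinal subset has full cardinality *)
  (forall A : T -> Prop, (forall x, exists y, A y /\ le T lt x y) ->
     inj_into T {y : T | A y}).

(* A (potential) condition: gamma^p, alpha |-> i(alpha)^p, and C^p_{alpha,i}.
   Values outside the relevant domain are irrelevant junk. *)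
Record Cond (L K : Type) : Type := mkCond {
  gam : L;
  iof : L -> K;
  clubs : L -> K -> L -> Prop
}.
Arguments gam {L K}.
Arguments iof {L K}.
Arguments clubs {L K}.

Section Forcing.
Variables L K : Type.
Variable ltL : L -> L -> Prop.
Variable ltK : K -> K -> Prop.

Definition IsCond (p : Cond L K) : Prop :=
  isLimit L ltL (gam p) /\
  (forall a, isLimit L ltL a -> le L ltL a (gam p) ->
     forall i, le K ltK (iof p a) i -> isClubIn L ltL (clubs p a i) a) /\
  (forall a, isLimit L ltL a -> le L ltL a (gam p) ->
     forall i j, le K ltK (iof p a) i -> ltK i j ->
       forall x, clubs p a i x -> clubs p a j x) /\
  (* (4) *)
  (forall a b, isLimit L ltL a -> isLimit L ltL b -> ltL a b -> le L ltL b (gam p) ->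
     forall i, le K ltK (iof p b) i -> inDerived L ltL (clubs p b i) a ->
       le K ltK (iof p a) i /\
       (forall x, (clubs p b i x /\ ltL x a) <-> clubs p a i x)) /\
  (* (5) *)
  (forall a b, isLimit L ltL a -> isLimit L ltL b -> ltL a b -> le L ltL b (gam p) ->
     exists i, le K ltK (iof p b) i /\ inDerived L ltL (clubs p b i) a).

(* q <= p : q end-extends p *)
Definition extends (q p : Cond L K) : Prop :=
  le L ltL (gam p) (gam q) /\
  (forall a, isLimit L ltL a -> le L ltL a (gam p) ->
     iof q a = iof p a /\
     (forall i, le K ltK (iof p a) i ->
        forall x, clubs q a i x <-> clubs p a i x)).
End Forcing.

Definition kappa_directed_closed (P : Type) (isP : P -> Prop)
    (leP : P -> P -> Prop) (Kap : Type) : Prop :=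
  forall S : P -> Prop,
    (forall p, S p -> isP p) ->
    (forall p1 p2, S p1 -> S p2 -> exists r, S r /\ leP r p1 /\ leP r p2) ->
    card_lt {p : P | S p} Kap ->
    exists q, isP q /\ forall p, S p -> leP q p.

(* Main.v *)
Require Import Defs.
From Stdlib Require Import Classical ClassicalEpsilon ProofIrrelevance.

Lemma choice' {A B : Type} (R : A -> B -> Prop) :
  (forall x, exists y, R x y) -> exists f : A -> B, forall x, R x (f x).
Proof.
  intros H. exists (fun x => proj1_sig (constructive_indefinite_description _ (H x))).
  intro x. exact (proj2_sig (constructive_indefinite_description _ (H x))).
Qed.

Lemma wo_irr {T} {lt : T -> T -> Prop} : IsWellOrder T lt -> forall x, ~ lt x x.
Proof. intros [H _]; exact H. Qed.
Lemma wo_trans {T} {lt : T -> T -> Prop} : IsWellOrder T lt -> forall x y z, lt x y -> lt y z -> lt x z.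
Proof. intros [_ [H _]]; exact H. Qed.
Lemma wo_tri {T} {lt : T -> T -> Prop} : IsWellOrder T lt -> forall x y, lt x y \/ x = y \/ lt y x.
Proof. intros [_ [_ [H _]]]; exact H. Qed.
Lemma wo_wf {T} {lt : T -> T -> Prop} : IsWellOrder T lt -> well_founded lt.
Proof. intros [_ [_ [_ H]]]; exact H. Qed.

Lemma le_refl {T} {lt : T -> T -> Prop} {x} : le T lt x x.
Proof. right; reflexivity. Qed.
Lemma lt_le {T} {lt : T -> T -> Prop} {x y} : lt x y -> le T lt x y.
Proof. left; auto. Qed.
Lemma le_trans' {T} {lt : T -> T -> Prop} (W : IsWellOrder T lt) {x y z} :
  le T lt x y -> le T lt y z -> le T lt x z.
Proof.
  intros [h|h] [g|g]; subst; try (left; assumption); try (right; reflexivity).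
  left; exact (wo_trans W _ _ _ h g).
Qed.
Lemma le_lt_trans {T} {lt : T -> T -> Prop} (W : IsWellOrder T lt) {x y z} :
  le T lt x y -> lt y z -> lt x z.
Proof. intros [h|h] g; subst; auto. exact (wo_trans W _ _ _ h g). Qed.
Lemma le_not_lt {T} {lt : T -> T -> Prop} (W : IsWellOrder T lt) x y :
  le T lt x y -> ~ lt y x.
Proof.
  intros [h|h] g; subst. exact (wo_irr W _ (wo_trans W _ _ _ h g)). exact (wo_irr W _ g).
Qed.
Lemma le_antisym {T} {lt : T -> T -> Prop} (W : IsWellOrder T lt) x y :
  le T lt x y -> le T lt y x -> x = y.
Proof. intros h g. destruct h as [h|h]; auto. exfalso; exact (le_not_lt W _ _ g h). Qed.
Lemma wo_min {T} {lt : T -> T -> Prop} (W : IsWellOrder T lt) (P : T -> Prop) x :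
  P x -> exists m, P m /\ forall y, P y -> le T lt m y.
Proof.
  revert x. apply (well_founded_ind (wo_wf W) (fun x => P x -> exists m, P m /\ forall y, P y -> le T lt m y)).
  intros x IH Px. destruct (classic (exists y, P y /\ lt y x)) as [[y [Py Hy]]|N].
  - exact (IH y Hy Py).
  - exists x; split; auto; intros y Py. destruct (wo_tri W x y) as [h|[h|h]].
    left; auto. right; auto. exfalso; apply N; eauto.
Qed.
Lemma max2 {T} {lt : T -> T -> Prop} (W : IsWellOrder T lt) x y :
  exists m, le T lt x m /\ le T lt y m.
Proof.
  destruct (wo_tri W x y) as [h|[h|h]].
  exists y; split; [left; auto| right; auto].
  exists y; split; [right; auto| right; auto].
  exists x; split; [right; auto| left; auto].
Qed.

Lemma bound_lemma {T} {lt : T -> T -> Prop} {I : Type} (f : I -> T) :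
  InfRegCard T lt -> ~ inj_into T I -> exists B, forall i, le T lt (f i) B.
Proof.
  intros [W [_ [_ R]]] NI.
  apply NNPP; intro NB.
  assert (C : forall x, exists y, (exists i, f i = y) /\ le T lt x y).
  { intro x. assert (H : ~ forall i, le T lt (f i) x) by (intro H; apply NB; exists x; exact H).
    apply not_all_ex_not in H. destruct H as [i Hi].
    exists (f i). split; [exists i; reflexivity|]. apply lt_le.
    destruct (wo_tri W x (f i)) as [h|[h|h]]; auto; exfalso; apply Hi; [right|left]; auto. }
  destruct (R _ C) as [h Hh].
  apply NI.
  exists (fun x => proj1_sig (constructive_indefinite_description _ (proj2_sig (h x)))).
  intros x y E.
  pose proof (proj2_sig (constructive_indefinite_description _ (proj2_sig (h x)))) as Fx.
  pose proof (proj2_sig (constructive_indefinite_description _ (proj2_sig (h y)))) as Fy.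
  cbv beta in Fx, Fy.
  rewrite E in Fx. rewrite Fx in Fy. clear E Fx.
  apply Hh. revert Fy. destruct (h x) as [u pu]; destruct (h y) as [v pv]; simpl.
  intro e; subst v. f_equal; apply proof_irrelevance.
Qed.

Lemma exists_limit {T} {lt : T -> T -> Prop} :
  InfRegCard T lt -> ~ inj_into T nat -> exists w, isLimit T lt w.
Proof.
  intros HT NI. pose proof HT as [W [_ [[g Hg] R]]].
  assert (NM : forall x, exists y, lt x y).
  { intro x. apply NNPP; intro N.
    assert (C : forall z, exists y, y = x /\ le T lt z y).
    { intro z. exists x. split; auto. destruct (wo_tri W z x) as [h|[h|h]].
      left; auto. right; auto. exfalso; apply N; eauto. }
    destruct (R _ C) as [h Hh].
    assert (E : h (g 0) = h (g 1)).
    { destruct (h (g 0)) as [u pu]; destruct (h (g 1)) as [v pv]. subst u v. f_equal; apply proof_irrelevance. }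
    apply Hh in E. apply Hg in E. discriminate. }
  destruct (choice' _ NM) as [s Hs].
  set (f := fun n => Nat.iter n s (g 0)).
  assert (Hf : forall n, lt (f n) (f (S n))) by (intro n; apply Hs).
  destruct (bound_lemma f HT NI) as [B HB].
  destruct (wo_min W (fun y => forall n, lt (f n) y) (s B)) as [w [Hw Hmin]].
  { intro n. exact (le_lt_trans W (HB n) (Hs B)). }
  exists w. split.
  - exists (f 0). apply Hw.
  - intros b Hb. assert (N : ~ forall n, lt (f n) b).
    { intro H. apply Hmin in H. exact (le_not_lt W _ _ H Hb). }
    apply not_all_ex_not in N. destruct N as [n Hn].
    exists (f (S n)). split; [|apply Hw].
    refine (le_lt_trans W _ (Hf n)).
    destruct (wo_tri W b (f n)) as [h|[h|h]]; [left;auto|right;auto|contradiction].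
Qed.

Lemma trivial_cond {L K} (ltL : L -> L -> Prop) (ltK : K -> K -> Prop)
  (W : IsWellOrder L ltL) (k0 : K) (w : L) :
  isLimit L ltL w ->
  IsCond L K ltL ltK {| gam := w; iof := fun _ => k0; clubs := fun a _ x => ltL x a |}.
Proof.
  intros Hw. unfold IsCond; cbn [gam iof clubs].
  split; [exact Hw|]. split; [|split; [|split]].
  - intros a Ha _ i _. split; [auto|split].
    + intros b Hb. destruct Ha as [_ Ha]. destruct (Ha b Hb) as [d [h1 h2]]. exists d; auto.
    + intros d Hd _ _; exact Hd.
  - intros; assumption.
  - intros a b Ha Hb Hab Hbw i Hi Hd. split; [exact Hi|].
    intro x; split. intros [_ h]; exact h. intro h; split; [exact (wo_trans W _ _ _ h Hab) | exact h].
  - intros a b Ha Hb Hab _. exists k0. split; [right; reflexivity|]. split; [exact Hab|].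
    intros c Hc. destruct Ha as [_ Ha]. destruct (Ha c Hc) as [d [h1 h2]].
    exists d. split; [exact (wo_trans W _ _ _ h2 Hab)| split; assumption].
Qed.

Lemma agree {L K} {ltL : L -> L -> Prop} {ltK : K -> K -> Prop} (S : Cond L K -> Prop)
  (Hdir : forall p1 p2, S p1 -> S p2 -> exists r, S r /\ extends L K ltL ltK r p1 /\ extends L K ltL ltK r p2)
  p p' a : S p -> S p' -> isLimit L ltL a -> le L ltL a (gam p) -> le L ltL a (gam p') ->
  iof p a = iof p' a /\ forall i, le K ltK (iof p a) i -> forall x, clubs p a i x <-> clubs p' a i x.
Proof.
  intros Sp Sp' Ha H1 H2. destruct (Hdir p p' Sp Sp') as [r [_ [[_ E1] [_ E2]]]].
  destruct (E1 a Ha H1) as [I1 C1]. destruct (E2 a Ha H2) as [I2 C2].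
  split. congruence. intros i Hi x.
  assert (Hi' : le K ltK (iof p' a) i) by (rewrite <- I2, I1; exact Hi).
  split; intro h.
  exact (proj1 (C2 i Hi' x) (proj2 (C1 i Hi x) h)).
  exact (proj1 (C1 i Hi x) (proj2 (C2 i Hi' x) h)).
Qed.

Lemma cmono {L K} {ltL : L -> L -> Prop} {ltK : K -> K -> Prop} (p : Cond L K) a j i x :
  IsCond L K ltL ltK p -> isLimit L ltL a -> le L ltL a (gam p) ->
  le K ltK (iof p a) j -> le K ltK j i -> clubs p a j x -> clubs p a i x.
Proof. intros (_&_&P3&_) Ha Hg Hj [h|h] c. exact (P3 a Ha Hg j i Hj h x c). subst; exact c. Qed.

Lemma der_mono {L} {ltL : L -> L -> Prop} (C D : L -> Prop) a :
  (forall x, C x -> D x) -> inDerived L ltL C a -> inDerived L ltL D a.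
Proof.
  intros H [c1 c2]; split; auto. intros b Hb; destruct (c2 b Hb) as [d [h1 h2]]; exists d; auto.
Qed.

Lemma club_ext {L} {ltL : L -> L -> Prop} (C D : L -> Prop) a :
  (forall x, C x <-> D x) -> isClubIn L ltL C a -> isClubIn L ltL D a.
Proof.
  intros H [c1 [c2 c3]]; split; [|split].
  - intros x Dx; apply c1, (proj2 (H x)), Dx.
  - intros b Hb; destruct (c2 b Hb) as [d [h1 h2]]; exists d; split; [apply (proj1 (H d)), h1|auto].
  - intros d Hd Hl Hc. apply (proj1 (H d)). apply c3; auto.
    intros b Hb; destruct (Hc b Hb) as [e [h1 h2]]; exists e; split; [apply (proj2 (H e)), h1|auto].
Qed.

Lemma caseB {L K} (ltL : L -> L -> Prop) (ltK : K -> K -> Prop)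
  (WL : IsWellOrder L ltL) (WK : IsWellOrder K ltK)
  (S : Cond L K -> Prop) (HS : forall p, S p -> IsCond L K ltL ltK p)
  (Hdir : forall p1 p2, S p1 -> S p2 -> exists r, S r /\ extends L K ltL ltK r p1 /\ extends L K ltL ltK r p2)
  (g : L) (Hg : isLimit L ltL g)
  (Hg1 : forall p, S p -> ltL (gam p) g)
  (Hg2 : forall b, ltL b g -> exists p, S p /\ ltL b (gam p))
  (istar : K)
  (Hi1 : forall p, S p -> le K ltK (iof p (gam p)) istar)
  (Hi2 : forall p p', S p -> S p' -> ltL (gam p) (gam p') ->
           inDerived L ltL (clubs p' (gam p') istar) (gam p)) :
  exists q, IsCond L K ltL ltK q /\ forall p, S p -> extends L K ltL ltK q p.
Proof.
  assert (Hpk : forall a, exists p, S p /\ (ltL a g -> ltL a (gam p))).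
  { intro a. destruct Hg as [[b Hb] _]. destruct (Hg2 b Hb) as [p0 [Sp0 _]].
    destruct (classic (ltL a g)) as [h|h].
    - destruct (Hg2 a h) as [p [Sp Hp]]. exists p; auto.
    - exists p0; split; auto; intro; contradiction. }
  destruct (choice' _ Hpk) as [pick Hpick].
  set (Uc := fun i x => exists p, S p /\ clubs p (gam p) i x).
  set (iofq := fun a => if excluded_middle_informative (a = g) then istar else iof (pick a) a).
  set (clq := fun a i x => if excluded_middle_informative (a = g) then Uc i x else clubs (pick a) a i x).
  assert (Eq1 : forall a, a <> g -> iofq a = iof (pick a) a /\ forall i x, clq a i x <-> clubs (pick a) a i x).
  { intros a Ha. unfold iofq, clq. cbv beta. destruct (excluded_middle_informative (a = g)); [contradiction|].
    split; [reflexivity| intros; tauto]. }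
  assert (Eq2 : iofq g = istar /\ forall i x, clq g i x <-> Uc i x).
  { unfold iofq, clq. cbv beta. destruct (excluded_middle_informative (g = g)); [|congruence].
    split; [reflexivity|intros; tauto]. }
  assert (F2 : forall a p, S p -> isLimit L ltL a -> ltL a g -> le L ltL a (gam p) ->
     iofq a = iof p a /\ forall i, le K ltK (iof p a) i -> forall x, clq a i x <-> clubs p a i x).
  { intros a p Sp Ha Hag Hap.
    assert (Hne : a <> g) by (intro e; subst a; exact (wo_irr WL _ Hag)).
    destruct (Eq1 a Hne) as [E1 E2].
    destruct (Hpick a) as [Spk Hpk']. specialize (Hpk' Hag).
    destruct (agree S Hdir (pick a) p a Spk Sp Ha (lt_le Hpk') Hap) as [A1 A2].
    split. congruence. intros i Hi x.
    assert (Hi' : le K ltK (iof (pick a) a) i) by (rewrite A1; exact Hi).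
    split; intro h.
    exact (proj1 (A2 i Hi' x) (proj1 (E2 i x) h)).
    exact (proj2 (E2 i x) (proj2 (A2 i Hi' x) h)). }
  assert (F3 : forall i p, le K ltK istar i -> S p -> forall x,
             (Uc i x /\ ltL x (gam p)) <-> clubs p (gam p) i x).
  { intros i p Hi Sp x. pose proof (HS p Sp) as (P1&P2&P3&P4&P5).
    assert (Hpi : le K ltK (iof p (gam p)) i) by exact (le_trans' WK (Hi1 p Sp) Hi).
    split.
    - intros [[p' [Sp' Hx]] Hxp].
      pose proof (HS p' Sp') as (Q1&Q2&Q3&Q4&Q5).
      assert (Hp'i : le K ltK (iof p' (gam p')) i) by exact (le_trans' WK (Hi1 p' Sp') Hi).
      destruct (wo_tri WL (gam p) (gam p')) as [h|[h|h]].
      + assert (D : inDerived L ltL (clubs p' (gam p') i) (gam p)).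
        { eapply der_mono; [|exact (Hi2 p p' Sp Sp' h)]. intros y c.
          exact (cmono p' (gam p') istar i y (HS p' Sp') Q1 le_refl (Hi1 p' Sp') Hi c). }
        destruct (Q4 (gam p) (gam p') P1 Q1 h le_refl i Hp'i D) as [R1 R2].
        destruct (agree S Hdir p' p (gam p) Sp' Sp P1 (lt_le h) le_refl) as [A1 A2].
        exact (proj1 (A2 i R1 x) (proj1 (R2 x) (conj Hx Hxp))).
      + destruct (agree S Hdir p' p (gam p') Sp' Sp Q1 le_refl (or_intror (eq_sym h))) as [A1 A2].
        rewrite h. exact (proj1 (A2 i Hp'i x) Hx).
      + assert (D : inDerived L ltL (clubs p (gam p) i) (gam p')).
        { eapply der_mono; [|exact (Hi2 p' p Sp' Sp h)]. intros y c.
          exact (cmono p (gam p) istar i y (HS p Sp) P1 le_refl (Hi1 p Sp) Hi c). }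
        destruct (P4 (gam p') (gam p) Q1 P1 h le_refl i Hpi D) as [R1 R2].
        destruct (agree S Hdir p p' (gam p') Sp Sp' Q1 (lt_le h) le_refl) as [A1 A2].
        exact (proj1 (proj2 (R2 x) (proj2 (A2 i R1 x) Hx))).
    - intro c. split. exists p; auto.
      destruct (P2 (gam p) P1 le_refl i Hpi) as [B _]. exact (B x c). }
  exists {| gam := g; iof := iofq; clubs := clq |}.
  split.
  - unfold IsCond; cbn [gam iof clubs].
    split; [exact Hg|]. split; [|split; [|split]].
    + intros a Ha Hle i Hi. destruct Hle as [Hlt|He].
      * destruct (Hpick a) as [Spk Hpk']. specialize (Hpk' Hlt).
        destruct (F2 a (pick a) Spk Ha Hlt (lt_le Hpk')) as [E1 E2].
        rewrite E1 in Hi.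
        apply (club_ext (clubs (pick a) a i)). intro x; apply iff_sym, (E2 i Hi x).
        exact (proj1 (proj2 (HS _ Spk)) a Ha (lt_le Hpk') i Hi).
      * subst a. destruct Eq2 as [E1 E2]. rewrite E1 in Hi.
        apply (club_ext (Uc i)). intro x; apply iff_sym, (E2 i x).
        split; [|split].
        -- intros x [p [Sp c]]. pose proof (HS p Sp) as (P1&P2&_).
           destruct (P2 (gam p) P1 le_refl i (le_trans' WK (Hi1 p Sp) Hi)) as [B _].
           exact (wo_trans WL _ _ _ (B x c) (Hg1 p Sp)).
        -- intros b Hb. destruct (Hg2 b Hb) as [p [Sp Hbp]]. pose proof (HS p Sp) as (P1&P2&_).
           destruct (P2 (gam p) P1 le_refl i (le_trans' WK (Hi1 p Sp) Hi)) as [_ [U _]].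
           destruct (U b Hbp) as [d [c [h1 h2]]]. exists d. split; [exists p; auto| split; auto].
           exact (wo_trans WL _ _ _ h2 (Hg1 p Sp)).
        -- intros d Hd Hdl Hcof. destruct (Hg2 d Hd) as [p [Sp Hdp]]. pose proof (HS p Sp) as (P1&P2&_).
           destruct (P2 (gam p) P1 le_refl i (le_trans' WK (Hi1 p Sp) Hi)) as [_ [_ Cl]].
           exists p. split; auto. apply Cl; auto.
           intros b Hb. destruct (Hcof b Hb) as [e [Ue [h1 h2]]].
           exists e. split; [|auto]. apply (F3 i p Hi Sp e). split; auto. exact (wo_trans WL _ _ _ h2 Hdp).
    + intros a Ha Hle i j Hi Hij x c. destruct Hle as [Hlt|He].
      * destruct (Hpick a) as [Spk Hpk']. specialize (Hpk' Hlt).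
        destruct (F2 a (pick a) Spk Ha Hlt (lt_le Hpk')) as [E1 E2].
        rewrite E1 in Hi.
        exact (proj2 (E2 j (le_trans' WK Hi (lt_le Hij)) x)
                 (cmono (pick a) a i j x (HS _ Spk) Ha (lt_le Hpk') Hi (lt_le Hij) (proj1 (E2 i Hi x) c))).
      * subst a. destruct Eq2 as [E1 E2]. rewrite E1 in Hi.
        destruct (proj1 (E2 i x) c) as [p [Sp c']]. pose proof (HS p Sp) as (P1&_).
        apply (proj2 (E2 j x)). exists p. split; auto.
        exact (cmono p (gam p) i j x (HS p Sp) P1 le_refl (le_trans' WK (Hi1 p Sp) Hi) (lt_le Hij) c').
    + intros a b Ha Hb Hab Hbg i Hi D.
      destruct Hbg as [Hbl|Hbe].
      * destruct (Hpick b) as [Spk Hpk']. specialize (Hpk' Hbl).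
        pose proof (HS _ Spk) as (P1&P2&P3&P4&P5).
        assert (Hag : ltL a g) by exact (wo_trans WL _ _ _ Hab Hbl).
        destruct (F2 b (pick b) Spk Hb Hbl (lt_le Hpk')) as [Eb1 Eb2].
        destruct (F2 a (pick b) Spk Ha Hag (lt_le (wo_trans WL _ _ _ Hab Hpk'))) as [Ea1 Ea2].
        rewrite Eb1 in Hi.
        assert (D' : inDerived L ltL (clubs (pick b) b i) a)
          by exact (der_mono _ _ a (fun y c => proj1 (Eb2 i Hi y) c) D).
        destruct (P4 a b Ha Hb Hab (lt_le Hpk') i Hi D') as [R1 R2].
        split. rewrite Ea1; exact R1.
        intro x. split.
        -- intros [c h]. apply (proj2 (Ea2 i R1 x)). apply (proj1 (R2 x)).
           split; [exact (proj1 (Eb2 i Hi x) c)|exact h].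
        -- intro c. destruct (proj2 (R2 x) (proj1 (Ea2 i R1 x) c)) as [c1 h].
           split; [exact (proj2 (Eb2 i Hi x) c1) | exact h].
      * subst b. destruct Eq2 as [E1 E2]. rewrite E1 in Hi.
        destruct (Hg2 a Hab) as [p [Sp Hap]]. pose proof (HS p Sp) as (P1&P2&P3&P4&P5).
        destruct D as [Da Dc].
        assert (D' : inDerived L ltL (clubs p (gam p) i) a).
        { split. apply (F3 i p Hi Sp a); split; [exact (proj1 (E2 i a) Da)| exact Hap].
          intros c Hc. destruct (Dc c Hc) as [d [dd [h1 h2]]]. exists d. split; [|auto].
          apply (F3 i p Hi Sp d). split; [exact (proj1 (E2 i d) dd)| exact (wo_trans WL _ _ _ h2 Hap)]. }
        assert (Hpi : le K ltK (iof p (gam p)) i) by exact (le_trans' WK (Hi1 p Sp) Hi).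
        destruct (P4 a (gam p) Ha P1 Hap le_refl i Hpi D') as [R1 R2].
        destruct (F2 a p Sp Ha Hab (lt_le Hap)) as [Ea1 Ea2].
        split. rewrite Ea1; exact R1.
        intro x. split.
        -- intros [c h]. apply (proj2 (Ea2 i R1 x)). apply (proj1 (R2 x)). split; [|exact h].
           apply (F3 i p Hi Sp x). split; [exact (proj1 (E2 i x) c)| exact (wo_trans WL _ _ _ h Hap)].
        -- intro c. destruct (proj2 (R2 x) (proj1 (Ea2 i R1 x) c)) as [c1 h]. split; [|exact h].
           apply (proj2 (E2 i x)). exact (proj1 (proj2 (F3 i p Hi Sp x) c1)).
    + intros a b Ha Hb Hab Hbg. destruct Hbg as [Hbl|Hbe].
      * destruct (Hpick b) as [Spk Hpk']. specialize (Hpk' Hbl).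
        pose proof (HS _ Spk) as (P1&P2&P3&P4&P5).
        destruct (F2 b (pick b) Spk Hb Hbl (lt_le Hpk')) as [Eb1 Eb2].
        destruct (P5 a b Ha Hb Hab (lt_le Hpk')) as [i [Hi D]]. exists i. split.
        rewrite Eb1; exact Hi.
        eapply der_mono; [|exact D]. intros y c; exact (proj2 (Eb2 i Hi y) c).
      * subst b. destruct (Hg2 a Hab) as [p [Sp Hap]]. pose proof (HS p Sp) as (P1&P2&P3&P4&P5).
        destruct (P5 a (gam p) Ha P1 Hap le_refl) as [j [Hj D]].
        destruct (max2 WK j istar) as [i [Hji Hsi]]. exists i.
        destruct Eq2 as [E1 E2]. split. rewrite E1; exact Hsi.
        eapply der_mono; [|exact D]. intros y c. apply (proj2 (E2 i y)). exists p. split; auto.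
        exact (cmono p (gam p) j i y (HS p Sp) P1 le_refl Hj Hji c).
  - intros p Sp. unfold extends; cbn [gam iof clubs]. split. exact (lt_le (Hg1 p Sp)).
    intros a Ha Hap. assert (Hag : ltL a g) by exact (le_lt_trans WL Hap (Hg1 p Sp)).
    destruct (F2 a p Sp Ha Hag Hap) as [E1 E2]. split. exact E1. intros i Hi x. exact (E2 i Hi x).
Qed.

Theorem mainTheorem18 (K : Type) (ltK : K -> K -> Prop)
    (L : Type) (ltL : L -> L -> Prop) :
  InfRegCard K ltK -> InfRegCard L ltL -> card_lt K L ->
  kappa_directed_closed (Cond L K) (IsCond L K ltL ltK) (extends L K ltL ltK) K.
Proof.
  intros HK HL [KL NLK] S HS Hdir [SK NKS].
  pose proof HK as [WK [_ [[nk Hnk] _]]]. pose proof HL as [WL _].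
  set (k0 := nk 0).
  assert (NLS : ~ inj_into L {p | S p}).
  { intros [f Hf]. destruct SK as [h Hh]. apply NLK. exists (fun x => h (f x)).
    intros x y E. apply Hf, Hh, E. }
  destruct (classic (exists p, S p)) as [[p0 Sp0]|NE].
  2: { assert (NLn : ~ inj_into L nat).
       { intros [f Hf]. apply NLK. exists (fun x => nk (f x)). intros x y E; apply Hf, Hnk, E. }
       destruct (exists_limit HL NLn) as [w Hw].
       exists {| gam := w; iof := fun _ => k0; clubs := fun a _ x => ltL x a |}.
       split. apply trivial_cond; auto. intros p Sp; exfalso; apply NE; eauto. }
  destruct (classic (exists p, S p /\ forall p', S p' -> le L ltL (gam p') (gam p)))
    as [[pm [Spm Hpm]]|NM].
  - exists pm. split. apply HS; auto.
    intros p Sp. destruct (Hdir pm p Spm Sp) as [r [Sr [[Er1 Er2] [Ep1 Ep2]]]].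
    split. apply Hpm; auto.
    intros a Ha Hap.
    assert (Ham : le L ltL a (gam pm)) by exact (le_trans' WL Hap (Hpm p Sp)).
    destruct (Er2 a Ha Ham) as [I1 C1].
    destruct (Ep2 a Ha Hap) as [I2 C2].
    split. congruence. intros i Hi x.
    assert (Hi' : le K ltK (iof pm a) i) by (rewrite <- I1, I2; exact Hi).
    split; intro h.
    exact (proj1 (C2 i Hi x) (proj2 (C1 i Hi' x) h)).
    exact (proj1 (C1 i Hi' x) (proj2 (C2 i Hi x) h)).
  - assert (NM' : forall p, S p -> exists p', S p' /\ ltL (gam p) (gam p')).
    { intros p Sp. apply NNPP; intro N. apply NM. exists p. split; auto. intros p' Sp'.
      destruct (wo_tri WL (gam p') (gam p)) as [h|[h|h]]. left; auto. right; auto.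
      exfalso; apply N; eauto. }
    destruct (bound_lemma (fun (p : {p | S p}) => gam (proj1_sig p)) HL NLS) as [B HB].
    destruct (wo_min WL (fun y => forall p, S p -> le L ltL (gam p) y) B) as [g [Hgub Hgmin]].
    { intros p Sp. exact (HB (exist _ p Sp)). }
    assert (Hg1 : forall p, S p -> ltL (gam p) g).
    { intros p Sp. destruct (Hgub p Sp) as [h|h]; auto. destruct (NM' p Sp) as [p' [Sp' h']].
      exfalso. pose proof (Hgub p' Sp') as u. rewrite <- h in u. exact (le_not_lt WL _ _ u h'). }
    assert (Hg2 : forall b, ltL b g -> exists p, S p /\ ltL b (gam p)).
    { intros b Hb. apply NNPP; intro N. assert (U : forall p, S p -> le L ltL (gam p) b).
      { intros p Sp. destruct (wo_tri WL (gam p) b) as [h|[h|h]]. left; auto. right; auto.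
        exfalso; apply N; eauto. }
      exact (le_not_lt WL _ _ (Hgmin b U) Hb). }
    assert (Hg : isLimit L ltL g).
    { split. exists (gam p0); auto. intros b Hb. destruct (Hg2 b Hb) as [p [Sp h]]. exists (gam p); auto. }
    assert (Hpair : forall pp : {p | S p} * {p | S p}, exists i : K,
      ltL (gam (proj1_sig (fst pp))) (gam (proj1_sig (snd pp))) ->
      le K ltK (iof (proj1_sig (snd pp)) (gam (proj1_sig (snd pp)))) i /\
      inDerived L ltL (clubs (proj1_sig (snd pp)) (gam (proj1_sig (snd pp))) i) (gam (proj1_sig (fst pp)))).
    { intros [[p Sp] [p' Sp']]; simpl. destruct (classic (ltL (gam p) (gam p'))) as [h|h].
      - pose proof (HS p' Sp') as (Q1&_&_&_&Q5). destruct (HS p Sp) as (P1&_).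
        destruct (Q5 (gam p) (gam p') P1 Q1 h le_refl) as [i [Hi D]]. exists i. auto.
      - exists k0. intro; contradiction. }
    destruct (choice' _ Hpair) as [ix Hix].
    assert (Hb : forall p : {p|S p}, exists B, forall p' : {p|S p}, le K ltK (ix (p, p')) B).
    { intro p. exact (bound_lemma (fun p' => ix (p, p')) HK NKS). }
    destruct (choice' _ Hb) as [bx Hbx].
    destruct (bound_lemma bx HK NKS) as [B1 HB1].
    destruct (bound_lemma (fun p : {p|S p} => iof (proj1_sig p) (gam (proj1_sig p))) HK NKS) as [B2 HB2].
    destruct (max2 WK B1 B2) as [istar [H1 H2]].
    apply (caseB ltL ltK WL WK S HS Hdir g Hg Hg1 Hg2 istar).
    + intros p Sp. exact (le_trans' WK (HB2 (exist _ p Sp)) H2).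
    + intros p p' Sp Sp' h. destruct (Hix (exist _ p Sp, exist _ p' Sp') h) as [Hi D].
      eapply der_mono; [|exact D]. intros y c.
      pose proof (HS p' Sp') as (Q1&_).
      refine (cmono p' (gam p') _ istar y (HS p' Sp') Q1 le_refl Hi _ c).
      exact (le_trans' WK (le_trans' WK (Hbx (exist _ p Sp) (exist _ p' Sp')) (HB1 _)) H1).
Qed.
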